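(* Let $(H,B_1,B_2)$ be a Rota-Baxter system of Hopf algebras, $G(H)$ the group of group-like elements of $H$ and $P(H)$ the Lie algebra of primitive elements of $H$. Then $B_1,B_2$ map $G(H)$ into $G(H)$ and $P(H)$ into $P(H)$, $(G(H),B_1|_{G(H)},S\circ B_2|_{G(H)})$ is a Rota-Baxter system of groups, and $(P(H),B_1|_{P(H)},-B_2|_{P(H)})$ is a Rota-Baxter system of Lie algebras.
   Context: $\mathbb{F}$ is a field of characteristic $0$; Sweedler notation $\Delta(a)=a_1\otimes a_2$. A Rota-Baxter system of Hopf algebras is a triple $(H,B_1,B_2)$ where $(H,\cdot,1,\Delta,\epsilon,S)$ is a cocommutative Hopf algebra and $B_1,B_2:H\to H$ are coalgebra homomorphisms with $B_1(1)=B_2(1)=1$ such that for all $a,b\in H$: $B_1(a)B_1(b)=B_1(B_1(a_1)bS(B_2(a_2)))$ and $B_2(a)B_2(b)=B_2(B_1(a_1)bS(B_2(a_2)))$. A Rota-Baxter system of groups is a group $G$ with maps $R_1,R_2:G\to G$ such that $R_1(a)R_1(b)=R_1(R_1(a)bR_2(a))$ and $R_2(b)R_2(a)=R_2(R_1(a)bR_2(a))$ for all $a,b\in G$. A Rota-Baxter system of Lie algebras is a Lie algebra $\mathfrak{g}$ with linear maps $R_1,R_2$ such that $[R_1(a),R_1(b)]=R_1([R_1(a),R_1(b)]-[R_2(a),R_2(b)])$ and $[R_2(b),R_2(a)]=R_2([R_1(a),R_1(b)]-[R_2(a),R_2(b)])$ for all $a,b\in\mathfrak{g}$. The bracket on $P(H)$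 is the commutator $[a,b]=ab-ba$. *)

(* Defs.v *)
(* A cocommutative Hopf algebra over a field F, with the
   coproduct given in Sweedler form as a finite list of simple tensors. *)
From HB Require Import structures.
From mathcomp Require Import all_boot all_order all_algebra.
Set Implicit Arguments. Unset Strict Implicit. Unset Printing Implicit Defensive.
Import Order.TTheory GRing.Theory.
Local Open Scope ring_scope.

Section Hopf.
Variables (F : fieldType) (H : algType F).

Definition lin (V : lmodType F) (g : H -> V) : Prop :=
  forall (k : F) (x y : H), g (k *: x + y) = k *: g x + g y.

Definition bilin (V : lmodType F) (f : H -> H -> V) : Prop :=
  (forall a, lin (f a)) /\ (forall b, lin (fun a => f a b)).

Definition trilin (V : lmodType F) (t : H -> H -> H -> V) : Prop :=
  (forall a b, lin (t a b)) /\ (forall a c, lin (fun b => t a b c)) /\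
  (forall b c, lin (fun a => t a b c)).

(* the value on  sum_i x_i (x) y_i  of the linear map H (x) H -> V induced by f *)
Definition tsum (V : lmodType F) (f : H -> H -> V) (s : seq (H * H)) : V :=
  \sum_(p <- s) f p.1 p.2.

(* equality of two elements of H (x) H, via the universal property of (x) *)
Definition teq (s t : seq (H * H)) : Prop :=
  forall (V : lmodType F) (f : H -> H -> V), bilin f -> tsum f s = tsum f t.

Record cocomm_hopf (cop : H -> seq (H * H)) (eps : H -> F) (S : H -> H) : Prop := {
  cop_lin : forall (V : lmodType F) (f : H -> H -> V), bilin f ->
              lin (fun a => tsum f (cop a));
  coassoc : forall (V : lmodType F) (t : H -> H -> H -> V), trilin t ->
    forall a, \sum_(p <- cop a) \sum_(q <- cop p.1) t q.1 q.2 p.2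
            = \sum_(p <- cop a) \sum_(q <- cop p.2) t p.1 q.1 q.2;
  eps_lin : forall (k : F) (x y : H), eps (k *: x + y) = k * eps x + eps y;
  counit_l : forall a, \sum_(p <- cop a) eps p.1 *: p.2 = a;
  counit_r : forall a, \sum_(p <- cop a) eps p.2 *: p.1 = a;
  cop1 : teq (cop 1) [:: (1, 1)];
  copM : forall a b, teq (cop (a * b))
           [seq (p.1 * q.1, p.2 * q.2) | p <- cop a, q <- cop b];
  eps1 : eps 1 = 1;
  epsM : forall a b, eps (a * b) = eps a * eps b;
  S_lin : lin S;
  antipode_l : forall a, \sum_(p <- cop a) S p.1 * p.2 = (eps a)%:A;
  antipode_r : forall a, \sum_(p <- cop a) p.1 * S p.2 = (eps a)%:A;
  cocomm : forall a, teq (cop a) [seq (p.2, p.1) | p <- cop a]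
}.

Definition coalg_hom (cop : H -> seq (H * H)) (eps : H -> F) (B : H -> H) : Prop :=
  [/\ lin B,
      forall a, teq (cop (B a)) [seq (B p.1, B p.2) | p <- cop a]
    & forall a, eps (B a) = eps a].

Definition rb_hopf_sys (cop : H -> seq (H * H)) (eps : H -> F) (S B1 B2 : H -> H)
  : Prop :=
  [/\ cocomm_hopf cop eps S, coalg_hom cop eps B1, coalg_hom cop eps B2,
      B1 1 = 1 /\ B2 1 = 1 &
      forall a b,
        B1 a * B1 b = B1 (\sum_(p <- cop a) B1 p.1 * b * S (B2 p.2)) /\
        B2 a * B2 b = B2 (\sum_(p <- cop a) B1 p.1 * b * S (B2 p.2))].

Definition grouplike (cop : H -> seq (H * H)) (g : H) : Prop :=
  g != 0 /\ teq (cop g) [:: (g, g)].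

Definition primitive (cop : H -> seq (H * H)) (x : H) : Prop :=
  teq (cop x) [:: (x, 1); (1, x)].

(* Rota-Baxter system of groups on the subgroup G of the units of H
   (group law = multiplication of H) *)
Definition rb_group_sys (G : H -> Prop) (R1 R2 : H -> H) : Prop :=
  forall a b, G a -> G b ->
    R1 a * R1 b = R1 (R1 a * b * R2 a) /\ R2 b * R2 a = R2 (R1 a * b * R2 a).

Definition lie_comm (a b : H) : H := a * b - b * a.

Definition rb_lie_sys (P : H -> Prop) (R1 R2 : H -> H) : Prop :=
  forall a b, P a -> P b ->
    lie_comm (R1 a) (R1 b)
      = R1 (lie_comm (R1 a) (R1 b) - lie_comm (R2 a) (R2 b)) /\
    lie_comm (R2 b) (R2 a)
      = R2 (lie_comm (R1 a) (R1 b) - lie_comm (R2 a) (R2 b)).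

End Hopf.

(* Main.v *)
Require Import Defs.
From HB Require Import structures.
From mathcomp Require Import all_boot all_order all_algebra ssrAC.
Set Implicit Arguments. Unset Strict Implicit. Unset Printing Implicit Defensive.
Import GRing.Theory.
Local Open Scope ring_scope.

Section Aux.
Variables (F : fieldType) (H : algType F).

Lemma lin0 (V : lmodType F) (g : H -> V) : lin g -> g 0 = 0.
Proof. move=> hg; have E := hg 1 0 0; rewrite !scale1r addr0 in E.
by apply: (addIr (g 0)); rewrite add0r -E. Qed.

Lemma linD (V : lmodType F) (g : H -> V) x y : lin g -> g (x + y) = g x + g y.
Proof. by move=> hg; have := hg 1 x y; rewrite !scale1r. Qed.

Lemma linZ (V : lmodType F) (g : H -> V) k x : lin g -> g (k *: x) = k *: g x.
Proof. by move=> hg; rewrite -[k *: x]addr0 hg lin0 // addr0. Qed.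

Lemma linN (V : lmodType F) (g : H -> V) x : lin g -> g (- x) = - g x.
Proof. by move=> hg; have := linZ (-1) x hg; rewrite !scaleN1r. Qed.

Lemma linB (V : lmodType F) (g : H -> V) x y : lin g -> g (x - y) = g x - g y.
Proof. by move=> hg; rewrite linD // linN. Qed.

Lemma lin_comp (V : lmodType F) (g : H -> V) (h : H -> H) :
  lin g -> lin h -> lin (fun x => g (h x)).
Proof. by move=> hg hh k x y; rewrite hh hg. Qed.

Lemma bilin_comp (V : lmodType F) (f : H -> H -> V) (g1 g2 : H -> H) :
  bilin f -> lin g1 -> lin g2 -> bilin (fun a b => f (g1 a) (g2 b)).
Proof.
move=> [f1 f2] h1 h2; split=> a k x y /=; first by rewrite h2 f1.
by rewrite h1 (f2 (g2 a)).
Qed.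

Lemma lin_id : lin (fun x : H => x). Proof. by []. Qed.

Lemma bilin_mul3 (b : H) : bilin (fun x y : H => x * b * y).
Proof.
split=> a k x y /=.
  by rewrite mulrDr -scalerAr.
by rewrite !mulrDl -!scalerAl.
Qed.

Lemma bilin_mul : bilin (fun x y : H => x * y).
Proof.
split=> a k x y /=; first by rewrite mulrDr -scalerAr.
by rewrite mulrDl -scalerAl.
Qed.

End Aux.

Section Main.
Variables (F : fieldType) (H : algType F) (cop : H -> seq (H * H)) (eps : H -> F)
  (S B1 B2 : H -> H).
Hypothesis Hs : rb_hopf_sys cop eps S B1 B2.

Lemma hH : cocomm_hopf cop eps S. Proof. by case: Hs. Qed.
Lemma hB1 : coalg_hom cop eps B1. Proof. by case: Hs. Qed.
Lemma hB2 : coalg_hom cop eps B2. Proof. by case: Hs. Qed.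
Lemma B11 : B1 1 = 1. Proof. by case: Hs => _ _ _ []. Qed.
Lemma B21 : B2 1 = 1. Proof. by case: Hs => _ _ _ []. Qed.
Lemma hRB a b : B1 a * B1 b = B1 (\sum_(p <- cop a) B1 p.1 * b * S (B2 p.2)) /\
        B2 a * B2 b = B2 (\sum_(p <- cop a) B1 p.1 * b * S (B2 p.2)).
Proof. by case: Hs => _ _ _ _; apply. Qed.
Lemma linB1 : lin B1. Proof. by case: hB1. Qed.
Lemma linB2 : lin B2. Proof. by case: hB2. Qed.
Lemma linS : lin S. Proof. exact: S_lin hH. Qed.

Lemma teqE (V : lmodType F) (f : H -> H -> V) s t : teq s t -> bilin f -> tsum f s = tsum f t.
Proof. by move=> h fb; apply: h. Qed.

Lemma lin_mull (c : H) : lin (fun x : H => c * x).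
Proof. by move=> k x y; rewrite mulrDr -scalerAr. Qed.
Lemma lin_mulr (c : H) : lin (fun x : H => x * c).
Proof. by move=> k x y; rewrite mulrDl -scalerAl. Qed.

Lemma eps0 : eps 0 = 0.
Proof. have E := eps_lin hH 1 0 0; rewrite scale1r addr0 mul1r in E.
by apply: (addIr (eps 0)); rewrite add0r -E. Qed.

Lemma bilin_epsl : bilin (fun x y : H => eps x *: y).
Proof.
split=> a k x y /=; first by rewrite scalerDr !scalerA mulrC.
by rewrite (eps_lin hH) scalerDl scalerA.
Qed.

Lemma bilin_Sl : bilin (fun x y : H => S x * y).
Proof. exact: bilin_comp (bilin_mul H) linS (@lin_id _ H). Qed.
Lemma bilin_Sr : bilin (fun x y : H => x * S y).
Proof. exact: bilin_comp (bilin_mul H) (@lin_id _ H) linS. Qed.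

Lemma tsum_grp (V : lmodType F) (f : H -> H -> V) g :
  teq (cop g) [:: (g, g)] -> bilin f -> tsum f (cop g) = f g g.
Proof. by move=> hg fb; rewrite (teqE hg fb) /tsum big_seq1. Qed.

Lemma tsum_prim (V : lmodType F) (f : H -> H -> V) x :
  primitive cop x -> bilin f -> tsum f (cop x) = f x 1 + f 1 x.
Proof. by move=> hx fb; rewrite (teqE hx fb) /tsum big_cons big_seq1. Qed.

Lemma eps_grp g : teq (cop g) [:: (g, g)] -> g != 0 -> eps g = 1.
Proof.
move=> hg g0.
have E : tsum (fun x y => eps x *: y) (cop g) = g := counit_l hH g.
rewrite (tsum_grp hg bilin_epsl) in E.
have : (eps g - 1) *: g == 0 by rewrite scalerBl E scale1r subrr.
by rewrite scaler_eq0 (negbTE g0) orbF subr_eq0 => /eqP. 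
Qed.

Lemma eps_prim x : primitive cop x -> eps x = 0.
Proof.
move=> hx.
have E : tsum (fun x y => eps x *: y) (cop x) = x := counit_l hH x.
rewrite (tsum_prim hx bilin_epsl) (eps1 hH) scale1r in E.
have : eps x *: (1 : H) == 0 by rewrite -(addrK x (eps x *: 1)) E subrr.
by rewrite scaler_eq0 (negbTE (oner_neq0 H)) orbF => /eqP.
Qed.

Lemma S1 : S 1 = 1.
Proof.
have E : tsum (fun x y => S x * y) (cop 1) = (eps 1)%:A := antipode_l hH 1.
by rewrite (teqE (cop1 hH) bilin_Sl) /tsum big_seq1 /= mulr1 (eps1 hH) scale1r in E.
Qed.

Lemma S_prim x : primitive cop x -> S x = - x.
Proof.
move=> hx.
have E : tsum (fun x y => S x * y) (cop x) = (eps x)%:A := antipode_l hH x.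
rewrite (tsum_prim hx bilin_Sl) eps_prim // scale0r S1 mulr1 mul1r in E.
by apply/eqP; rewrite -addr_eq0 E.
Qed.

Lemma S_grp h : teq (cop h) [:: (h, h)] -> S h * h = (eps h)%:A /\ h * S h = (eps h)%:A.
Proof.
move=> hh; split.
  have E : tsum (fun x y => S x * y) (cop h) = (eps h)%:A := antipode_l hH h.
  by rewrite (tsum_grp hh bilin_Sl) in E.
have E : tsum (fun x y => x * S y) (cop h) = (eps h)%:A := antipode_r hH h.
by rewrite (tsum_grp hh bilin_Sr) in E.
Qed.

Lemma copM_teq a b sa sb : teq (cop a) sa -> teq (cop b) sb ->
  teq (cop (a * b)) [seq (p.1 * q.1, p.2 * q.2) | p <- sa, q <- sb].
Proof.
move=> ha hb V f fb.
rewrite (teqE (copM hH a b) fb) /tsum !big_allpairs_dep /=.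
transitivity (\sum_(p <- cop a) \sum_(q <- sb) f (p.1 * q.1) (p.2 * q.2)).
  apply: eq_bigr => p _.
  exact: (teqE hb (bilin_comp fb (lin_mull p.1) (lin_mull p.2))).
rewrite exchange_big [RHS]exchange_big; apply: eq_bigr => q _.
exact: (teqE ha (bilin_comp fb (lin_mulr q.1) (lin_mulr q.2))).
Qed.

Lemma tsum_coalg B (V : lmodType F) (f : H -> H -> V) a :
  coalg_hom cop eps B -> bilin f ->
  tsum f (cop (B a)) = tsum (fun x y => f (B x) (B y)) (cop a).
Proof.
case=> lB cB _ fb; rewrite (teqE (cB a) fb) /tsum big_map //.
Qed.

Lemma coalg_teq B a s : coalg_hom cop eps B -> teq (cop a) s ->
  teq (cop (B a)) [seq (B p.1, B p.2) | p <- s].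
Proof.
move=> hB ha V f fb; rewrite tsum_coalg // (teqE ha); last first.
  by case: hB => lB _ _; apply: bilin_comp.
by rewrite /tsum big_map.
Qed.


Lemma grp_B B g : coalg_hom cop eps B -> grouplike cop g -> grouplike cop (B g).
Proof.
move=> hB [g0 hg]; split; last exact: (coalg_teq hB hg).
have e1 : eps (B g) = 1 by case: hB => _ _ ->; exact: eps_grp.
apply/eqP => E; move: e1; rewrite E eps0 => /eqP; by rewrite eq_sym oner_eq0.
Qed.

Lemma prim_B B x : coalg_hom cop eps B -> B 1 = 1 -> primitive cop x -> primitive cop (B x).
Proof. by move=> hB B1e hx; have := coalg_teq hB hx; rewrite /= B1e. Qed.

Lemma grp_S h : grouplike cop h -> grouplike cop (S h).
Proof.
move=> [h0 hh]; have eh := eps_grp hh h0; have [Sl Sr] := S_grp hh.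
rewrite eh scale1r in Sl Sr.
split; first by apply/eqP => E; move: Sl; rewrite E mul0r => /eqP; rewrite eq_sym oner_eq0.
move=> V f fb; set u := S h in Sl Sr *.
have fb' := bilin_comp fb (lin_mulr u) (lin_mulr u).
have refl : teq (cop u) (cop u) by [].
have := teqE (copM_teq refl hh) fb'.
rewrite Sl (teqE (cop1 hH) fb') /tsum big_allpairs_dep big_seq1 /= !mul1r => E.
rewrite big_seq1 E; apply: eq_bigr => p _; rewrite big_seq1 /= -!mulrA Sr !mulr1 //.
Qed.

Lemma bilin_RB b : bilin (fun x y => B1 x * b * S (B2 y)).
Proof. exact: bilin_comp (bilin_mul3 b) linB1 (lin_comp linS linB2). Qed.

Lemma rbg a b : grouplike cop a -> grouplike cop b ->
  B1 a * B1 b = B1 (B1 a * b * S (B2 a)) /\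
  S (B2 b) * S (B2 a) = S (B2 (B1 a * b * S (B2 a))).
Proof.
move=> ga gb; have [a0 ha] := ga.
have E : \sum_(p <- cop a) B1 p.1 * b * S (B2 p.2) = B1 a * b * S (B2 a)
  := tsum_grp ha (bilin_RB b).
have [R1 R2] := hRB a b; rewrite E in R1 R2; split => //.
set c := B1 a * b * S (B2 a) in R2 *.
have [a2 ha2] := grp_B hB2 ga; have [b2 hb2] := grp_B hB2 gb.
have hc : teq (cop (B2 c)) [:: (B2 c, B2 c)] by rewrite -R2; exact: copM_teq ha2 hb2.
have ec : eps (B2 c) = 1 by rewrite -R2 (epsM hH) (eps_grp ha2 a2) (eps_grp hb2 b2) mulr1.
have [Sl _] := S_grp hc; rewrite ec scale1r in Sl.
have [_ Sra] := S_grp ha2; have [_ Srb] := S_grp hb2.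
rewrite (eps_grp ha2 a2) scale1r in Sra; rewrite (eps_grp hb2 b2) scale1r in Srb.
have inv : B2 c * (S (B2 b) * S (B2 a)) = 1.
  by rewrite -R2 mulrA -(mulrA (B2 a)) Srb mulr1 Sra.
by rewrite -[LHS]mul1r -Sl -mulrA inv mulr1.
Qed.


Definition T w := \sum_(p <- cop w) B1 p.1 * S (B2 p.2).

Lemma bilin_T : bilin (fun x y => B1 x * S (B2 y)).
Proof. exact: bilin_comp (bilin_mul H) linB1 (lin_comp linS linB2). Qed.

Lemma T_lin : lin T.
Proof. exact: (cop_lin hH bilin_T). Qed.

Lemma BT w : B1 w = B1 (T w) /\ B2 w = B2 (T w).
Proof.
have [R1 R2] := hRB w 1.
have E : \sum_(p <- cop w) B1 p.1 * 1 * S (B2 p.2) = T w.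
  by apply: eq_bigr => p _; rewrite mulr1.
by rewrite E B11 B21 !mulr1 in R1 R2.
Qed.

Lemma tsum_pp (V : lmodType F) (f : H -> H -> V) u v :
  primitive cop u -> primitive cop v -> bilin f ->
  tsum f (cop (u * v)) = f (u * v) 1 + f u v + f v u + f 1 (u * v).
Proof.
move=> hu hv fb; rewrite (teqE (copM_teq hu hv) fb) /tsum /= !big_cons big_nil /=.
by rewrite !mulr1 !mul1r addr0 !addrA.
Qed.

Lemma primB2 u : primitive cop u -> primitive cop (B2 u).
Proof. by move=> hu; apply: prim_B hB2 B21 hu. Qed.
Lemma primB1 u : primitive cop u -> primitive cop (B1 u).
Proof. by move=> hu; apply: prim_B hB1 B11 hu. Qed.

Lemma SB2pp u v : primitive cop u -> primitive cop v ->
  S (B2 (u * v)) = - B2 (u * v) + B2 u * B2 v + B2 v * B2 u.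
Proof.
move=> hu hv.
have E : tsum (fun x y => S x * y) (cop (B2 (u * v))) = (eps (B2 (u * v)))%:A
  := antipode_l hH _.
rewrite (tsum_coalg (u * v) hB2 bilin_Sl) in E.
rewrite (tsum_pp hu hv (bilin_comp bilin_Sl linB2 linB2)) in E.
have e0 : eps (B2 (u * v)) = 0.
  by case: hB2 => _ _ ->; rewrite (epsM hH) (eps_prim hu) mul0r.
rewrite e0 scale0r B21 S1 mulr1 mul1r (S_prim (primB2 hu)) (S_prim (primB2 hv)) !mulNr in E.
apply/eqP; rewrite -subr_eq0 -E !opprD !opprK !addrA.
by rewrite [X in X == _](ACl (1*3*4*2)).
Qed.

Lemma T_pp u v : primitive cop u -> primitive cop v ->
  T (u * v) = B1 (u * v) - B2 (u * v) - ((B1 u - B2 u) * B2 v + (B1 v - B2 v) * B2 u).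
Proof.
move=> hu hv.
transitivity (tsum (fun x y => B1 x * S (B2 y)) (cop (u * v))); first by [].
rewrite (tsum_pp hu hv bilin_T) B11 B21 S1 mulr1 mul1r SB2pp // (S_prim (primB2 hu)) (S_prim (primB2 hv)).
rewrite !mulrN !mulrBl !opprD !opprK !addrA.
by rewrite (ACl (1*4*2*5*3*6)).
Qed.

Lemma RBprim a b : primitive cop a ->
  \sum_(p <- cop a) B1 p.1 * b * S (B2 p.2) = B1 a * b - b * B2 a.
Proof.
move=> ha.
transitivity (tsum (fun x y => B1 x * b * S (B2 y)) (cop a)); first by [].
rewrite (tsum_prim ha (bilin_RB b)) B11 B21 S1 (S_prim (primB2 ha)). by rewrite mulr1 mul1r mulrN.
Qed.

Lemma cB u : primitive cop u -> B1 (B1 u - B2 u) = B1 u /\ B2 (B1 u - B2 u) = B2 u.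
Proof.
move=> hu; have [R1 R2] := hRB u 1.
by rewrite RBprim // B11 B21 !mulr1 mul1r in R1 R2.
Qed.

Lemma Ty a b : primitive cop a -> primitive cop b ->
  T (B1 a * b - b * B2 a) = B1 (B1 a * b - b * B2 a) - B2 (B1 a * b - b * B2 a)
     - ((B1 a - B2 a) * B2 b + (B1 b - B2 b) * B2 a).
Proof.
move=> ha hb.
have [c1 c2] := cB ha.
rewrite (linB _ _ T_lin) (T_pp (primB1 ha) hb) (T_pp hb (primB2 ha)).
rewrite !(linB _ _ linB1) !(linB _ _ linB2).
set x := B1 a; set y := B2 a; set P := B1 b - B2 b.
have cx : B1 x - B2 x - (B1 y - B2 y) = x - y.
  rewrite opprB !addrA.
  have -> : B1 x - B2 x + B2 y - B1 y = (B1 x - B1 y) - (B2 x - B2 y).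
    by rewrite opprB !addrA (ACl (1*4*3*2)).
  by rewrite -(linB _ _ linB1) -(linB _ _ linB2) c1 c2.
have cy : B2 x - B2 y = y by rewrite -(linB _ _ linB2) c2.
have Z : ((B1 x - B2 x) * B2 b + P * B2 x) - (P * B2 y + (B1 y - B2 y) * B2 b)
   = (x - y) * B2 b + P * y.
  have -> : ((B1 x - B2 x) * B2 b + P * B2 x) - (P * B2 y + (B1 y - B2 y) * B2 b)
     = (B1 x - B2 x - (B1 y - B2 y)) * B2 b + P * (B2 x - B2 y).
    rewrite [in RHS]mulrBl [in RHS]mulrBr [in LHS]opprD !addrA. by rewrite (ACl (1*4*2*3)).
  by rewrite cx cy.
rewrite -Z.
set K := (B1 x - B2 x) * B2 b + P * B2 x.
set L := P * B2 y + (B1 y - B2 y) * B2 b.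
rewrite !opprD !opprK !addrA. by rewrite (ACl (1*5*2*6*3*4*7*8)).
Qed.


Lemma lieRB a b : primitive cop a -> primitive cop b ->
  lie_comm (B1 a) (B1 b)
      = B1 (lie_comm (B1 a) (B1 b) - lie_comm (- B2 a) (- B2 b)) /\
  lie_comm (- B2 b) (- B2 a)
      = - B2 (lie_comm (B1 a) (B1 b) - lie_comm (- B2 a) (- B2 b)).
Proof.
move=> ha hb.
have [R1a R2a] := hRB a b; have [R1b R2b] := hRB b a.
rewrite RBprim // in R1a R2a; rewrite RBprim // in R1b R2b.
set ya := B1 a * b - b * B2 a in R1a R2a.
set yb := B1 b * a - a * B2 b in R1b R2b.
have e1 : lie_comm (B1 a) (B1 b) = B1 (ya - yb).
  by rewrite /lie_comm R1a R1b -(linB _ _ linB1).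
have e2 : lie_comm (- B2 a) (- B2 b) = B2 (ya - yb).
  by rewrite /lie_comm !mulrNN R2a R2b -(linB _ _ linB2).
have Tz : T (ya - yb) = B1 (ya - yb) - B2 (ya - yb).
  rewrite (linB ya yb T_lin) (Ty ha hb) (Ty hb ha).
  rewrite [(B1 b - B2 b) * B2 a + _]addrC.
  rewrite opprB addrA subrK (linB ya yb linB1) (linB ya yb linB2).
  by rewrite !opprB !addrA (ACl (1*4*3*2)).
rewrite e1 e2 -Tz -(BT (ya - yb)).1 -(BT (ya - yb)).2; split => //.
by rewrite /lie_comm !mulrNN R2a R2b (linB ya yb linB2) opprB.
Qed.

End Main.


Unset Implicit Arguments.

Theorem mainTheorem8 (F : fieldType) (H : algType F)
  (cop : H -> seq (H * H)) (eps : H -> F) (S B1 B2 : H -> H) :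
  [pchar F] =i pred0 ->
  rb_hopf_sys cop eps S B1 B2 ->
  [/\ (forall g, grouplike cop g -> grouplike cop (B1 g) /\ grouplike cop (B2 g)),
      (forall x, primitive cop x -> primitive cop (B1 x) /\ primitive cop (B2 x)),
      (forall g, grouplike cop g -> grouplike cop (S (B2 g))),
      rb_group_sys (grouplike cop) B1 (fun g => S (B2 g))
    & rb_lie_sys (primitive cop) B1 (fun x => - B2 x)].
Proof.
move=> _ Hs; split.
- by move=> g hg; split; [exact (@grp_B _ _ _ _ _ _ _ Hs B1 g (hB1 Hs) hg) | exact (@grp_B _ _ _ _ _ _ _ Hs B2 g (hB2 Hs) hg)].
- by move=> x hx; split; [exact (primB1 Hs hx) | exact (primB2 Hs hx)].
- by move=> g hg; exact (grp_S Hs (@grp_B _ _ _ _ _ _ _ Hs B2 g (hB2 Hs) hg)).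
- by move=> a b ha hb; exact (rbg Hs ha hb).
- by move=> a b ha hb; exact (lieRB Hs ha hb).
Qed.
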